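(* Let $\|\cdot\|$ be a norm on $\mathbb{R}^d$ and $\Phi$ a mirror map whose Bregman divergence satisfies $\frac{m}{2}\|x-y\|^2\le D_\Phi(x,y)\le\frac{M}{2}\|x-y\|^2$ for all $x,y$, with $0<m\le M$; let $\kappa=M/m$. Consider Primal Online Balanced Descent with parameter $\beta>0$, norm $\|\cdot\|$ and mirror map $\Phi$, at round $t$, producing $x_t$ from $x_{t-1}$ and convex cost function $f_t$ with minimizer $v_t$. Let $x_t^*$ be a point with $H_t^*=f_t(x_t^* )<H_t=f_t(x_t)$, and suppose $f_t(x)\ge\alpha\|x-v_t\|$ for all $x$, where $\alpha>0$. Then $$\|x_t-x_t^*\|-\|x_t^*-x_{t-1}\|\le-\gamma\|x_t-x_{t-1}\|,\qquad\text{where }\gamma=\frac{1}{\sqrt{\kappa}}\sqrt{1+\left(\tfrac{2}{\alpha\beta}\right)^2}-\tfrac{2}{\alpha\beta}.$$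
   Context: $D_\Phi(x,y)=\Phi(x)-\Phi(y)-\nabla\Phi(y)^T(x-y)$; $\Pi^\Phi_K(x)=\arg\min_{y\in K}D_\Phi(y,x)$. Primal Online Balanced Descent with parameter $\beta>0$: given $x_{t-1}$ and $f_t$, let $v_t=\arg\min_x f_t(x)$; if $\|x_{t-1}-v_t\|<\beta f_t(v_t)$ set $x_t=v_t$; otherwise, with $K^l_t=\{x:f_t(x)\le l\}$ and $x(l)=\Pi^\Phi_{K^l_t}(x_{t-1})$, increase $l$ until $\|x(l)-x_{t-1}\|=\beta l$ and set $x_t=x(l)$. *)

(* Defs.v *)
From HB Require Import structures.
From mathcomp Require Import all_boot all_order all_algebra.
From mathcomp Require Import all_classical all_reals all_analysis.
Set Implicit Arguments. Unset Strict Implicit. Unset Printing Implicit Defensive.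
Import Order.TTheory GRing.Theory Num.Theory.
Import numFieldNormedType.Exports.
Local Open Scope classical_set_scope.
Local Open Scope ring_scope.

Definition dotv (R : realType) (d : nat) (u v : 'rV[R]_d) : R :=
  \sum_(i < d) u 0 i * v 0 i.

Definition bregman (R : realType) (d : nat) (Phi : 'rV[R]_d -> R)
  (gPhi : 'rV[R]_d -> 'rV[R]_d) (x y : 'rV[R]_d) : R :=
  Phi x - Phi y - dotv (gPhi y) (x - y).

Definition is_gradient (R : realType) (d : nat) (Phi : 'rV[R]_d -> R)
  (gPhi : 'rV[R]_d -> 'rV[R]_d) : Prop :=
  forall x v : 'rV[R]_d, is_derive x v Phi (dotv (gPhi x) v).

Definition is_norm (R : realType) (d : nat) (N : 'rV[R]_d -> R) : Prop :=
  [/\ forall x y, N (x + y) <= N x + N y,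
      forall (a : R) x, N (a *: x) = `|a| * N x
    & forall x, N x = 0 -> x = 0].

Definition convex_fun (R : realType) (d : nat) (f : 'rV[R]_d -> R) : Prop :=
  forall (x y : 'rV[R]_d) (t : R), 0 <= t <= 1 ->
    f (t *: x + (1 - t) *: y) <= t * f x + (1 - t) * f y.

Definition level_set (R : realType) (d : nat) (f : 'rV[R]_d -> R) (l : R)
  : set 'rV[R]_d := [set x | f x <= l].

Definition is_bregman_proj (R : realType) (d : nat) (Phi : 'rV[R]_d -> R)
  (gPhi : 'rV[R]_d -> 'rV[R]_d) (K : set 'rV[R]_d) (x p : 'rV[R]_d) : Prop :=
  K p /\ forall y, K y -> bregman Phi gPhi p x <= bregman Phi gPhi y x.

Definition pobd_step (R : realType) (d : nat) (N : 'rV[R]_d -> R)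
  (Phi : 'rV[R]_d -> R) (gPhi : 'rV[R]_d -> 'rV[R]_d) (beta : R)
  (f : 'rV[R]_d -> R) (v xprev xt : 'rV[R]_d) : Prop :=
  (N (xprev - v) < beta * f v /\ xt = v) \/
  (beta * f v <= N (xprev - v) /\
   exists l : R, is_bregman_proj Phi gPhi (level_set f l) xprev xt /\
                 N (xt - xprev) = beta * l).

(* Main.v *)
Require Import Defs.
From HB Require Import structures.
From mathcomp Require Import all_boot all_order all_algebra.
From mathcomp Require Import all_classical all_reals all_analysis.
From mathcomp Require Import ring lra.
Import Order.TTheory GRing.Theory Num.Theory.
Import numFieldNormedType.Exports.
Local Open Scope classical_set_scope.
Local Open Scope ring_scope.

Section S.
Variables (R : realType) (d : nat).
Implicit Types u w x y : 'rV[R]_d.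

Lemma dotvD u x y : dotv u (x + y) = dotv u x + dotv u y.
Proof. rewrite /dotv -big_split /=; apply: eq_bigr => i _; rewrite mxE; ring. Qed.
Lemma dotvB u x y : dotv u (x - y) = dotv u x - dotv u y.
Proof. rewrite /dotv -sumrB /=; apply: eq_bigr => i _; rewrite !mxE; ring. Qed.
Lemma dotvZ u (k : R) x : dotv u (k *: x) = k * dotv u x.
Proof. rewrite /dotv mulr_sumr; apply: eq_bigr => i _; rewrite !mxE; ring. Qed.
Lemma dotvBl u w x : dotv (u - w) x = dotv u x - dotv w x.
Proof. rewrite /dotv -sumrB /=; apply: eq_bigr => i _; rewrite !mxE; ring. Qed.

Lemma three_point Phi gPhi x y z :
  bregman Phi gPhi y x = bregman Phi gPhi y z + bregman Phi gPhi z x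
     + dotv (gPhi z - gPhi x) (y - z).
Proof.
rewrite /bregman dotvBl !dotvB; ring.
Qed.

Lemma foc Phi gPhi xt xp y : is_gradient Phi gPhi ->
  (forall s : R, 0 < s < 1 ->
     bregman Phi gPhi xt xp <= bregman Phi gPhi (xt + s *: (y - xt)) xp) ->
  0 <= dotv (gPhi xt - gPhi xp) (y - xt).
Proof.
move=> Hg Hs; rewrite leNgt; apply/negP => Hlt.
set w := y - xt.
have [Hd Hv] := Hg xt w.
have Hc : (fun h : R => h^-1 *: ((Phi \o shift xt) (h *: w) - Phi xt)) @ 0^'
   --> dotv (gPhi xt) w.
  rewrite -Hv; exact: Hd.
have := (@cvgr_lt R _ _ _ _ _ Hc (dotv (gPhi xp) w)).
rewrite dotvBl subr_lt0 in Hlt.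
move=> /(_ _ Hlt) Hn.
have Hr : \forall h \near 0^'+, [/\ 0 < h, h < 1 &
   h^-1 *: ((Phi \o shift xt) (h *: w) - Phi xt) < dotv (gPhi xp) w].
  near=> h; split.
  - by near: h; exact: nbhs_right_gt.
  - by near: h; apply: nbhs_right_lt; exact: ltr01.
  - near: h; move: Hn; rewrite /at_right /dnbhs !near_withinE.
    by apply: filterS => h Hh /gt_eqF/negbT/Hh.
have [h [h0 h1 hq]] := filter_ex Hr.
have := Hs h; rewrite h0 h1 => /(_ isT).
rewrite /bregman /= in hq *.
rewrite -[_ *: _]/(h^-1 * _) ltr_pdivrMl // in hq.
rewrite -/w (addrC xt (h *: w)).
have e1 : dotv (gPhi xp) (h *: w + xt - xp) = h * dotv (gPhi xp) w + dotv (gPhi xp) (xt - xp).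
  rewrite /dotv mulr_sumr -big_split; apply: eq_bigr => i _ /=; rewrite !mxE; ring.
rewrite e1.
lra.
Unshelve. all: by end_near.
Qed.
Lemma real_part (m M alpha beta a b dl : R) :
  0 < m -> m <= M -> 0 < alpha -> 0 < beta -> 0 <= a -> 0 <= b -> 0 <= dl ->
  m * (a ^+ 2 + dl ^+ 2) <= M * b ^+ 2 -> alpha * beta * a <= 2 * dl ->
  a - b <= - (1 / Num.sqrt (M / m) * Num.sqrt (1 + (2 / (alpha * beta)) ^+ 2)
               - 2 / (alpha * beta)) * dl.
Proof.
move=> m0 mM a0 b0 a0' b0' d0 Hb Ha.
have M0 : 0 < M by apply: lt_le_trans mM.
set c := 2 / (alpha * beta).
have ab0 : 0 < alpha * beta by apply: mulr_gt0.
have c0 : 0 <= c by apply: divr_ge0 => //; apply: ltW.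
have acd : a <= c * dl.
  rewrite /c mulrC mulrA ler_pdivlMr //; rewrite mulrC; lra.
set r := 1 / Num.sqrt (M / m).
have Mm0 : 0 < M / m by apply: divr_gt0.
have sq0 : 0 < Num.sqrt (M / m) by rewrite sqrtr_gt0.
have r0 : 0 < r by rewrite /r divr_gt0.
have r2 : r ^+ 2 = m / M.
  rewrite /r expr_div_n sqr_sqrtr ?(ltW Mm0) // expr1n.
  by rewrite invf_div mul1r.
have r1 : r <= 1.
  have : r ^+ 2 <= 1 by rewrite r2 ler_pdivrMr // mul1r.
  move=> h; nra.
set p := Num.sqrt (a ^+ 2 + dl ^+ 2).
have p0 : 0 <= p by apply: sqrtr_ge0.
have p2 : p ^+ 2 = a ^+ 2 + dl ^+ 2 by rewrite sqr_sqrtr // addr_ge0 // sqr_ge0.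
set s := Num.sqrt (1 + c ^+ 2).
have s0 : 0 <= s by apply: sqrtr_ge0.
have s2 : s ^+ 2 = 1 + c ^+ 2 by rewrite sqr_sqrtr // addr_ge0 // sqr_ge0.
have brp : r * p <= b.
  have h1 : (r * p) ^+ 2 <= b ^+ 2.
    rewrite exprMn r2 p2 mulrAC ler_pdivrMr //; lra.
  have : 0 <= r * p by apply: mulr_ge0 => //; apply: ltW.
  move=> h2; nra.
set q := s * dl.
have q2 : q ^+ 2 = (1 + c ^+ 2) * dl ^+ 2 by rewrite /q exprMn s2.
have q0 : 0 <= q by apply: mulr_ge0.
have qc : c * dl <= q by nra.
have pa : a <= p by nra.
have pq : p <= q by nra.
have qp : q - p <= c * dl - a.
  have e : (q - p) * (q + p) = (c * dl - a) * (c * dl + a).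
    have -> : (q - p) * (q + p) = q ^+ 2 - p ^+ 2 by ring.
    rewrite q2 p2; ring.
  nra.
have : r * (q - p) <= q - p by nra.
rewrite /q; nra.
Qed.
End S.

Theorem lemma14 (R : realType) (d : nat) (N : 'rV[R]_d -> R)
  (Phi : 'rV[R]_d -> R) (gPhi : 'rV[R]_d -> 'rV[R]_d) (m M : R)
  (beta alpha : R) (f : 'rV[R]_d -> R) (v xprev xt xstar : 'rV[R]_d) :
  is_norm N ->
  is_gradient Phi gPhi ->
  0 < m -> m <= M ->
  (forall x y, m / 2 * N (x - y) ^+ 2 <= bregman Phi gPhi x y) ->
  (forall x y, bregman Phi gPhi x y <= M / 2 * N (x - y) ^+ 2) ->
  0 < beta ->
  convex_fun f ->
  (forall x, f v <= f x) ->
  pobd_step N Phi gPhi beta f v xprev xt ->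
  f xstar < f xt ->
  0 < alpha ->
  (forall x, alpha * N (x - v) <= f x) ->
  let kappa := M / m in
  let gamma := 1 / Num.sqrt kappa * Num.sqrt (1 + (2 / (alpha * beta)) ^+ 2)
               - 2 / (alpha * beta) in
  N (xt - xstar) - N (xstar - xprev) <= - gamma * N (xt - xprev).
Proof.
move=> Hn Hg m0 mM Hlo Hhi b0 Hf Hv Hstep Hfs a0 Hal; rewrite [in X in is_true X]/=.
case: Hn => Ntri Nsc N0.
have Nz : N 0 = 0.
  by have := Nsc 0 0; rewrite scale0r normr0 mul0r.
have Nsym : forall x, N (- x) = N x.
  by move=> x; rewrite -scaleN1r Nsc normrN normr1 mul1r.
have Nge0 : forall x, 0 <= N x.
  move=> x; have := Ntri x (- x); rewrite subrr Nz Nsym; lra.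
case: Hstep => [[_ ext] | [_ [l [[Kxt Hmin] HN]]]].
  by subst xt; have := Hv xstar; lra.
rewrite /level_set /= in Kxt.
have Hfoc : 0 <= dotv (gPhi xt - gPhi xprev) (xstar - xt).
  apply: (@foc R d Phi gPhi xt xprev xstar Hg) => s /andP[s0 s1]; apply: Hmin; rewrite /level_set /=.
  have -> : xt + s *: (xstar - xt) = s *: xstar + (1 - s) *: xt.
    by apply/matrixP => i j; rewrite !mxE; ring.
  apply: le_trans (Hf _ _ _ _) _; first by rewrite (ltW s0) (ltW s1).
  nra.
have tp := @three_point R d Phi gPhi xprev xstar xt.
have h1 := Hlo xstar xt.
have h2 := Hlo xt xprev.
have h3 := Hhi xstar xprev.
have e1 : N (xstar - xt) = N (xt - xstar) by rewrite -Nsym opprB.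
have e2 : N (v - xstar) = N (xstar - v) by rewrite -Nsym opprB.
have tri : N (xt - xstar) <= N (xt - v) + N (xstar - v).
  by rewrite -e2; have := Ntri (xt - v) (v - xstar); rewrite addrA subrK.
have f1 := Hal xt.
have f2 := Hal xstar.

apply: real_part => //.
- have : m / 2 * N (xt - xstar) ^+ 2 + m / 2 * N (xt - xprev) ^+ 2 <=
         M / 2 * N (xstar - xprev) ^+ 2 by rewrite -e1; lra.
  move=> h; nra.
- rewrite HN.
  have : alpha * N (xt - xstar) <= 2 * l by nra.
  move=> h; nra.
Qed.
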